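(* Let $s\ge2$, $k\ge1$ and $s_0$ be integers with $0\le s_0<\min\{k,s\}$. Let $n=sk+s_0$, $d_c=\lfloor n/s\rfloor=k$ and $d_o=\lfloor (n-1)/(s-1)\rfloor$, and define $$f(s,k,s_0)=\frac{\gamma_{MBR,c}}{\gamma_{MBR,o}}=\frac{\dfrac{d_c}{kd_c-\lfloor k/2\rfloor\lceil k/2\rceil}}{\dfrac{2d_o}{2kd_o-k^2+k}}.$$ Then $$f(s,k,s_0)\le\frac{2}{3}\cdot\frac{(s+3)k+s-3}{(s+1)k-1}.$$
   Context: $\gamma_{MBR,c}=\frac{d_cM}{kd_c-\lfloor k/2\rfloor\lceil k/2\rceil}$ is the minimum repair bandwidth (functional repair) of the Fixed Cluster Repair System with $s$ clusters, and $\gamma_{MBR,o}=\frac{2d_oM}{2kd_o-k^2+k}$ is the minimum-bandwidth-regenerating repair bandwidth of a standard regenerating code with repair degree $d_o$; the file size $M$ cancels in the ratio. *)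

(* Defs.v *)
From mathcomp Require Import all_boot all_order all_algebra.
Set Implicit Arguments. Unset Strict Implicit. Unset Printing Implicit Defensive.
Import Order.TTheory GRing.Theory Num.Theory.
Local Open Scope ring_scope.

Definition fcrs_n (s k s0 : nat) : nat := (s * k + s0)%N.
Definition fcrs_dc (s k s0 : nat) : nat := (fcrs_n s k s0 %/ s)%N.
Definition fcrs_do (s k s0 : nat) : nat := ((fcrs_n s k s0 - 1) %/ (s - 1))%N.

(* gamma_MBR,c / M = d_c / (k d_c - floor(k/2) ceil(k/2)) *)
Definition gamma_c (s k s0 : nat) : rat :=
  let dc := fcrs_dc s k s0 in
  (dc%:R) / ((k * dc)%:R - ((k %/ 2)%N * uphalf k)%:R).

(* gamma_MBR,o / M = 2 d_o / (2 k d_o - k^2 + k) *)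
Definition gamma_o (s k s0 : nat) : rat :=
  let d := fcrs_do s k s0 in
  (2 * d%:R) / (2 * k%:R * d%:R - (k%:R)^+2 + k%:R).

Definition f_ratio (s k s0 : nat) : rat := gamma_c s k s0 / gamma_o s k s0.

(* Main.v *)
Require Import Defs.
From mathcomp Require Import all_boot all_order all_algebra.
From mathcomp Require Import zify ring lra.
Import Order.TTheory GRing.Theory Num.Theory.
Local Open Scope ring_scope.

Lemma key (K Q S A : rat) : 1 <= K -> K <= Q -> 2 <= S -> Q*S+1 <= S*K+K+Q ->
  4*A <= K*K -> 0 <= A ->
  K/(K*K - A) / (2*Q/(2*K*Q - K^+2 + K)) <= 2/3 * (((S+3)*K+S-3)/((S+1)*K-1)).
Proof.
move=> h1 h2 h3 h4 h5 h6.
have hQ : 0 < Q by lra.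
have hKA : 0 < K*K - A by nra.
have hN : 0 < 2*K*Q - K^+2 + K by rewrite expr2; nra.
have hD : 0 < (S+1)*K-1 by nra.
have -> : K/(K*K - A) / (2*Q/(2*K*Q - K^+2 + K)) =
   (K*(2*K*Q - K^+2 + K)) / (2*Q*(K*K-A)).
  by field; rewrite ?gt_eqF //; nra.
have -> : 2/3 * (((S+3)*K+S-3)/((S+1)*K-1)) = (2*((S+3)*K+S-3))/(3*((S+1)*K-1)).
  by field; rewrite ?gt_eqF //; nra.
rewrite ler_pdivrMr; last nra.
rewrite [X in _ <= X]mulrAC ler_pdivlMr; last nra.
have e1 : Q*(S-1)*(K-1) <= (K-1)*((S+1)*K-1) by nra.
have e2 : (2*Q-K+1)*((S+1)*K-1) <= Q*((S+3)*K+S-3) by nra.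
have e3 : K*(2*K*Q - K^+2 + K)*((S+1)*K-1) <= K*K*Q*((S+3)*K+S-3).
  have -> : K*(2*K*Q - K^+2 + K)*((S+1)*K-1) = K*K*((2*Q-K+1)*((S+1)*K-1)) by rewrite expr2; ring.
  have -> : K*K*Q*((S+3)*K+S-3) = K*K*(Q*((S+3)*K+S-3)) by ring.
  apply: ler_wpM2l => //; nra.
have e4 : 0 <= Q*((S+3)*K+S-3) by nra.
have e5 : 3*(K*K) <= 4*(K*K-A) by lra.
have e6 : 3*(K*K)*(Q*((S+3)*K+S-3)) <= 4*(K*K-A)*(Q*((S+3)*K+S-3)) by apply: ler_wpM2r.
have -> : K * (2 * K * Q - K ^+ 2 + K) * (3 * ((S + 1) * K - 1)) = 3*(K*(2*K*Q - K^+2 + K)*((S+1)*K-1)) by ring.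
have -> : 2 * ((S + 3) * K + S - 3) * (2 * Q * (K * K - A)) = 4*(K*K-A)*(Q*((S+3)*K+S-3)) by ring.
have e7 : 3*(K*K*Q*((S+3)*K+S-3)) <= 4*(K*K-A)*(Q*((S+3)*K+S-3)).
  by have -> : 3*(K*K*Q*((S+3)*K+S-3)) = 3*(K*K)*(Q*((S+3)*K+S-3)) by ring.
lra.
Qed.

Theorem proposition1 (s k s0 : nat) :
  (2 <= s)%N -> (1 <= k)%N -> (s0 < minn k s)%N ->
  f_ratio s k s0 <=
    (2%:R / 3%:R) * ((((s + 3) * k + s)%:R - 3%:R) / (((s + 1) * k)%:R - 1)).
Proof.
move=> hs hk hs0.
have hdc : fcrs_dc s k s0 = k.
  rewrite /fcrs_dc /fcrs_n mulnC divnMDl; last lia.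
  rewrite divn_small; lia.
have hq1 : (fcrs_do s k s0 * (s-1) <= s*k+s0-1)%N by rewrite /fcrs_do /fcrs_n leq_trunc_div.
have hq2 : (k <= fcrs_do s k s0)%N by rewrite /fcrs_do /fcrs_n leq_divRL; lia.
rewrite /f_ratio /gamma_c /gamma_o hdc.
move: hq1 hq2; set q := fcrs_do s k s0 => hq1 hq2.
have hq3 : (q*s+1 <= s*k+k+q)%N by nia.
set a := ((k %/ 2) * uphalf k)%N.
have ha : (4 * a <= k*k)%N.
  rewrite /a uphalf_half divn2. case/orP: (orbN (odd k)) => ho.
  - rewrite ho. rewrite -{3 4}(odd_double_half k) ho. lia.
  - rewrite (negbTE ho). rewrite -{3 4}(odd_double_half k) (negbTE ho). lia.
clearbody a q. rewrite !(natrD, natrM); apply: (key (k%:R) (q%:R) (s%:R) (a%:R)).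
- by rewrite (ler_nat _ 1).
- by rewrite ler_nat.
- by rewrite ler_nat.
- by have := hq3; rewrite -(ler_nat rat) !natrD !natrM.
- by have := ha; rewrite -(ler_nat rat) !natrM.
- exact: ler0n.
Qed.
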